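(* Let $1\le r\le n$, let $d_1,\dots,d_{n-r}$ be positive integers, let $J=(x_1^{d_1},\dots,x_{n-r}^{d_{n-r}})\subseteq S$, and let $D\ge l$. If $P$ is a $D$-exact cone decomposition of $N_{JF}$ with Macaulay constants $b_0,\dots,b_{n+1}$, then \[ b_r=d_1\cdots d_{n-r}\,m+D. \]
   Context: Standing notation. $S=\mathbb{K}[x_1,\dots,x_n]$ is standard graded, and $F=Se_1\oplus\cdots\oplus Se_m$ is a graded free module with $\deg(e_j)\ge0$ integers; $l=\max_j\deg(e_j)$. Monomials of $F$ are $x^\alpha e_j$ of degree $|\alpha|+\deg(e_j)$. $N_{JF}$ is the $\mathbb{K}$-span of the monomials of $F$ not in $JF$. Cones. For a homogeneous $h\in F$ and $u\subseteq\{x_1,\dots,x_n\}$, the cone $C(h,u)=h\,\mathbb{K}[u]$ has degree $\deg h$ and dimension $|u|$. A cone decomposition of a subspace $T\subseteq F$ is a finite set $P$ of cones with $T=\bigoplus_{C\in P}C$; $P^+=\{C\in P:\dim C>0\}$. $P$ is $q$-standard if (1) no $C\in P^+$ has $\deg C<q$, and (2) for every $C\in P^+$ and every integer $d$ with $q\le d\le\deg C$ there is $C'\in P$ with $\deg C'=d$ and $\dim C'\ge\dim C$. $P$ is $q$-exact if it is $q$-standard and distinct cones of $P^+$ have distinct degrees. The Macaulay constants of a $q$-exact $P$ are $b_k=\max(\{q\}\cup\{1+\deg C:C\in P,\ \dim C\ge k\})$ for $k=0,\dots,n+1$. *)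

(* Defs.v *)
From HB Require Import structures.
From mathcomp Require Import all_boot all_order all_algebra.
Set Implicit Arguments. Unset Strict Implicit. Unset Printing Implicit Defensive.
Import Order.TTheory GRing.Theory Num.Theory.

(* Exponent vectors of monomials of S = K[x_1..x_n] (variables indexed 0..n-1). *)
Definition expv (n : nat) := {ffun 'I_n -> nat}.

(* Monomials x^alpha e_j of F = S e_1 (+) ... (+) S e_m. *)
Definition fmon (n m : nat) := (expv n * 'I_m)%type.

(* Elements of F (with coefficients in K): coefficient functions on monomials,
   required to be finitely supported (see [finsupp]). *)
Definition Fel (K : fieldType) (n m : nat) := fmon n m -> K.

Definition finsupp (K : fieldType) n m (f : Fel K n m) : Prop :=
  exists s : seq (fmon n m), forall x, x \notin s -> f x = 0%R.

(* degree of the monomial x^alpha e_j, given the degrees deg(e_j) *)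
Definition mdeg n m (dege : 'I_m -> nat) (x : fmon n m) : nat :=
  (\sum_(i < n) x.1 i + dege x.2)%N.

Definition monfn (K : fieldType) n m (x : fmon n m) : Fel K n m :=
  fun y => if y == x then 1%R else 0%R.

(* multiplication of f in F by the monomial x^beta of S *)
Definition mulmon (K : fieldType) n m (beta : expv n) (f : Fel K n m) : Fel K n m :=
  fun y => if [forall i, beta i <= y.1 i] then f ([ffun i => y.1 i - beta i], y.2)
           else 0%R.

(* x_{i+1}^{d_i} for i < n - r, as an exponent vector *)
Definition xpow n r (d : 'I_(n - r) -> nat) (i : 'I_(n - r)) : expv n :=
  [ffun k : 'I_n => if val k == val i then d i else 0%N].

(* membership in the submodule JF, J = (x_1^{d_1},...,x_{n-r}^{d_{n-r}}) *)
Definition inJF (K : fieldType) n m r (d : 'I_(n - r) -> nat) (f : Fel K n m) : Prop :=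
  exists fs : 'I_(n - r) -> Fel K n m,
    (forall i, finsupp (fs i)) /\
    forall x, f x = (\sum_(i < n - r) mulmon (xpow d i) (fs i) x)%R.

(* N_{JF}: the K-span of the monomials of F not in JF *)
Definition NJF (K : fieldType) n m r (d : 'I_(n - r) -> nat) (f : Fel K n m) : Prop :=
  finsupp f /\ forall x, f x != 0%R -> ~ inJF d (monfn K x).

(* A cone C(h,u): h homogeneous of degree cdeg, u a set of variables. *)
Record cone (K : fieldType) n m := Cone {
  ch : Fel K n m;
  cu : {set 'I_n};
  cdeg : nat }.

Definition cdim K n m (c : cone K n m) : nat := #|cu c|.

Definition cone_valid K n m (dege : 'I_m -> nat) (c : cone K n m) : Prop :=
  finsupp (ch c) /\ (exists x, ch c x != 0%R) /\
  forall x, ch c x != 0%R -> mdeg dege x = cdeg c.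

(* the set h K[u] : K-linear combinations of x^alpha h, supp alpha in u *)
Definition cone_set K n m (c : cone K n m) (g : Fel K n m) : Prop :=
  exists s : seq (expv n * K),
    (forall p, p \in s -> forall i, i \notin cu c -> p.1 i = 0%N) /\
    forall x, g x = (\sum_(p <- s) p.2 * mulmon p.1 (ch c) x)%R.

(* P = {P_0,...,P_{k-1}} is a cone decomposition of T : T = (+)_i P_i *)
Definition cone_decomp K n m (dege : 'I_m -> nat) (T : Fel K n m -> Prop)
    k (P : 'I_k -> cone K n m) : Prop :=
  [/\ forall i, cone_valid dege (P i),
      forall i g, cone_set (P i) g -> T g,
      forall t, T t -> exists g : 'I_k -> Fel K n m,
        (forall i, cone_set (P i) (g i)) /\ forall x, t x = (\sum_i g i x)%R
    & forall g : 'I_k -> Fel K n m, (forall i, cone_set (P i) (g i)) ->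
        (forall x, (\sum_i g i x)%R = 0%R) -> forall i x, g i x = 0%R].

Definition q_standard K n m k (P : 'I_k -> cone K n m) (q : nat) : Prop :=
  (forall i, 0 < cdim (P i) -> q <= cdeg (P i)) /\
  (forall i, 0 < cdim (P i) -> forall e, q <= e <= cdeg (P i) ->
     exists j, cdeg (P j) = e /\ cdim (P i) <= cdim (P j)).

Definition q_exact K n m k (P : 'I_k -> cone K n m) (q : nat) : Prop :=
  q_standard P q /\
  forall i j, i != j -> 0 < cdim (P i) -> 0 < cdim (P j) -> cdeg (P i) != cdeg (P j).

Definition macaulay K n m k (P : 'I_k -> cone K n m) (q j : nat) : nat :=
  maxn q (\max_(i < k | j <= cdim (P i)) (cdeg (P i)).+1).

(* Main.v *)
Require Import Defs.
From HB Require Import structures.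
From mathcomp Require Import all_boot all_order all_algebra.
From mathcomp Require Import zify.
Set Implicit Arguments. Unset Strict Implicit. Unset Printing Implicit Defensive.

Fixpoint comp (s k : nat) : nat :=
  match s with 0 => nat_of_bool (k == 0) | s'.+1 => \sum_(i < k.+1) comp s' (k - i) end.
Definition gf s a t := if a <= t then comp s (t - a) else 0.

Lemma compS0 s : comp s.+1 0 = comp s 0.
Proof. by rewrite /= big_ord_recl big_ord0 addn0. Qed.

Lemma compSS s k : comp s.+1 k.+1 = comp s k.+1 + comp s.+1 k.
Proof. by rewrite [LHS]/= big_ord_recl subn0. Qed.

Lemma gfS s a t : gf s.+1 a t.+1 = gf s.+1 a t + gf s a t.+1.
Proof.
rewrite /gf; case: (leqP a t) => h.
  by rewrite (leq_trans h (leqnSn _)) subSn // compSS addnC.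
case: (ltngtP a t.+1) => h2; first by lia.
  by [].
by rewrite h2 subnn compS0.
Qed.
Lemma gf0 a t : gf 0 a t = (t == a).
Proof.
rewrite /gf /=; case: (leqP a t) => h; last by case: eqP => //; lia.
by rewrite subn_eq0 eqn_leq h andbT.
Qed.

Lemma comp1 k : comp 1 k = 1.
Proof. by elim: k => [|k IH]; rewrite ?compS0 // compSS IH. Qed.

Lemma comp_mono s k : comp s k <= comp s.+1 k.
Proof. by case: k => [|k]; rewrite ?compS0 // compSS leq_addr. Qed.

Lemma comp2 k : comp 2 k = k.+1.
Proof. by elim: k => [|k IH]; rewrite ?compS0 // compSS IH comp1. Qed.

Lemma comp_big s k : 1 < s -> k < comp s k.
Proof.
elim: s => // s IH; rewrite ltnS leq_eqVlt => /orP[/eqP<-|h].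
  by rewrite comp2.
exact: leq_trans (IH h) (comp_mono _ _).
Qed.

Lemma gf_ge a t : a <= t -> 0 < gf 1 a t.
Proof. by rewrite /gf => ->; rewrite comp1. Qed.

Lemma diff_step (L : seq (nat * nat)) (R : seq nat) (r k : nat) T :
  k.+1 < r ->
  (forall t, T <= t -> \sum_(p <- L | k <= p.1) gf (p.1 - k) p.2 t =
                       \sum_(a <- R) gf (r - k) a t) ->
  forall t, T + \max_(p <- L) p.2 + 2 <= t ->
     \sum_(p <- L | k.+1 <= p.1) gf (p.1 - k.+1) p.2 t =
     \sum_(a <- R) gf (r - k.+1) a t.
Proof.
move=> kr H t Ht.
have split u : \max_(p <- L) p.2 < u ->
   \sum_(p <- L | k <= p.1) gf (p.1 - k) p.2 u =
   \sum_(p <- L | k.+1 <= p.1) gf (p.1 - k) p.2 u.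
  move=> hu; rewrite (bigID (fun p => k.+1 <= p.1)) /=.
  rewrite [X in _ + X = _]big1_seq ?addn0.
    by apply: eq_bigl => p; case: (ltngtP k p.1) => //= h; lia.
  move=> [s a] /andP[/andP[/= h1 h2] pL] /=.
  move: h2; rewrite -ltnNge => h2; have -> : s - k = 0 by lia.
  rewrite gf0; case: eqP => // e.
  have : (s, a).2 <= \max_(p <- L) p.2 by apply: leq_bigmax_seq.
  by rewrite /=; lia.
case: t Ht => [|t] Ht; first by lia.
have H1 := H t.+1 ltac:(lia).
have H2 := H t ltac:(lia).
rewrite split in H1; last by lia.
rewrite split in H2; last by lia.
have e1 : \sum_(p <- L | k.+1 <= p.1) gf (p.1 - k) p.2 t.+1 =
          \sum_(p <- L | k.+1 <= p.1) gf (p.1 - k) p.2 t +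
          \sum_(p <- L | k.+1 <= p.1) gf (p.1 - k.+1) p.2 t.+1.
  rewrite -big_split /=; apply: eq_bigr => p hp.
  have -> : p.1 - k = (p.1 - k.+1).+1 by lia.
  by rewrite gfS.
have e2 : \sum_(a <- R) gf (r - k) a t.+1 =
          \sum_(a <- R) gf (r - k) a t + \sum_(a <- R) gf (r - k.+1) a t.+1.
  rewrite -big_split /=; apply: eq_bigr => a _.
  have -> : r - k = (r - k.+1).+1 by lia.
  by rewrite gfS.
by move: H1; rewrite e1 e2 H2 => /addnI.
Qed.

Lemma diff_main (L : seq (nat * nat)) (R : seq nat) (r : nat) : 0 < r ->
  (forall t, \sum_(p <- L) gf p.1 p.2 t = \sum_(a <- R) gf r a t) ->
  all (fun p : nat * nat => p.1 <= r) L /\ count (fun p : nat * nat => p.1 == r) L = size R.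
Proof.
move=> r0 H.
have claim : forall k, k < r -> exists T, forall t, T <= t ->
   \sum_(p <- L | k <= p.1) gf (p.1 - k) p.2 t = \sum_(a <- R) gf (r - k) a t.
  elim=> [_|k IH kr].
    exists 0 => t _; rewrite subn0 -H; apply: eq_bigr => p _; by rewrite subn0.
  have [T HT] := IH (ltnW kr).
  exists (T + \max_(p <- L) p.2 + 2); exact: diff_step kr HT.
have [T HT] := claim r.-1 ltac:(lia).
set A := \max_(p <- L) p.2; set B := \max_(a <- R) a.
have HA p : p \in L -> p.2 <= A.
  by move=> pL; apply: leq_bigmax_seq.
have HB a : a \in R -> a <= B.
  by move=> aR; apply: leq_bigmax_seq.
set t := T + A + B + size R + 1.
have := HT t ltac:(lia).
have -> : r - r.-1 = 1 by lia.
have -> : \sum_(a <- R) gf 1 a t = size R.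
  rewrite -sum1_size big_seq [RHS]big_seq; apply: eq_bigr => a aR.
  by rewrite /gf ifT ?comp1 //; have := HB a aR; lia.
move=> E.
have allr : all (fun p : nat * nat => p.1 <= r) L.
  apply/allP => -[s a] pL /=; rewrite leqNgt; apply/negP => hp.
  have hA := HA _ pL; rewrite /= in hA.
  move: E; rewrite (big_rem _ pL) ifT /=; last by lia.
  have : size R < gf (s - r.-1) a t.
    rewrite /gf ifT; last by lia.
    apply: leq_trans (comp_big _ _); last by lia.
    by lia.
  by lia.
split=> //.
rewrite -E -sum1_count big_mkcond /= [RHS]big_mkcond /= big_seq [RHS]big_seq.
apply: eq_bigr => -[s a] pL; have := allP allr _ pL; have := HA _ pL => /= h1 h2.
case: (ltngtP s r) => h3 //.
- case: ifP => // h4; rewrite /gf ifT; last by lia.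
  have -> : s - r.-1 = 0 by lia.
  have : t - a != 0 by rewrite subn_eq0 -ltnNge; lia.
  by rewrite /=; case: eqP.
- by lia.
- rewrite h3 ifT; last by lia.
  have -> : r - r.-1 = 1 by lia.
  by rewrite /gf ifT ?comp1 //; lia.
Qed.

Section Vec.
Variable n : nat.
Implicit Types (a b c : expv n) (u : seq 'I_n).

Definition vzero : expv n := [ffun => 0].
Definition vadd a b : expv n := [ffun i => a i + b i].
Definition vsc (i : 'I_n) (x : nat) : expv n := [ffun j => if j == i then x else 0].
Definition vsum a := \sum_(i < n) a i.

Lemma vsum_add a b : vsum (vadd a b) = vsum a + vsum b.
Proof. by rewrite /vsum -big_split; apply: eq_bigr => i _; rewrite ffunE. Qed.

Lemma vsum_sc i x : vsum (vsc i x) = x.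
Proof.
rewrite /vsum (bigD1 i) //= big1 ?ffunE ?eqxx ?addn0 // => j /negPf h.
by rewrite ffunE h.
Qed.

Lemma vsum0 : vsum vzero = 0.
Proof. by rewrite /vsum big1 // => i _; rewrite ffunE. Qed.

Fixpoint vecs u (k : nat) : seq (expv n) :=
  match u with
  | [::] => if k == 0 then [:: vzero] else [::]
  | i :: u' => [seq vadd (vsc i x) b | x <- iota 0 k.+1, b <- vecs u' (k - x)]
  end.

Lemma vecs_cons i u k : vecs (i :: u) k =
  [seq vadd (vsc i x) b | x <- iota 0 k.+1, b <- vecs u (k - x)].
Proof. by []. Qed.

Lemma size_vecs u k : size (vecs u k) = comp (size u) k.
Proof.
elim: u k => [|i u IH] k; first by case: k.
rewrite vecs_cons size_allpairs_dep sumnE big_map.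
rewrite -[iota 0 k.+1]/(index_iota 0 k.+1) big_mkord.
by apply: eq_bigr => j _; rewrite IH.
Qed.

Lemma vecs_supp u k a : a \in vecs u k -> (forall i, i \notin u -> a i = 0) /\ vsum a = k.
Proof.
elim: u k a => [|i u IH] k a; [rewrite /= | rewrite vecs_cons].
  case: eqP => [->|]; last by [].
  by rewrite inE => /eqP ->; split => [i _|]; rewrite ?ffunE ?vsum0.
case/allpairsPdep => x [b [xin bin ->]].
have [h1 h2] := IH _ _ bin; rewrite mem_iota in xin.
split.
  move=> j; rewrite inE negb_or => /andP[/negPf ji ju].
  by rewrite !ffunE ji h1.
rewrite vsum_add vsum_sc h2; lia.
Qed.

Lemma vecs_mem u k a : uniq u -> (forall i, i \notin u -> a i = 0) -> vsum a = k ->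
   a \in vecs u k.
Proof.
elim: u k a => [|i u IH] k a; [rewrite /= | rewrite vecs_cons].
  move=> _ h <-; have -> : a = vzero by apply/ffunP => i; rewrite ffunE h.
  by rewrite vsum0 inE.
move=> /andP[iu uu] h hs.
pose b : expv n := [ffun j => if j == i then 0 else a j].
have ea : a = vadd (vsc i (a i)) b.
  by apply/ffunP => j; rewrite !ffunE; case: eqP => [->|]; rewrite ?addn0.
have sb : vsum a = a i + vsum b by rewrite {1}ea vsum_add vsum_sc.
apply/allpairsPdep; exists (a i), b; split => //.
  rewrite mem_iota; lia.
apply: IH => //.
  move=> j ju; rewrite ffunE; case: eqP => // /eqP ji.
  by apply: h; rewrite inE negb_or ji.
lia.
Qed.

Lemma vadd_inj_sc i x y b c : b i = 0 -> c i = 0 ->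
  vadd (vsc i x) b = vadd (vsc i y) c -> x = y /\ b = c.
Proof.
move=> bi ci e.
have := congr1 (fun f : expv n => f i) e; rewrite !ffunE eqxx bi ci !addn0 => exy.
split=> //; apply/ffunP => j.
have := congr1 (fun f : expv n => f j) e; rewrite !ffunE exy.
by move/addnI.
Qed.

Lemma vecs_uniq u k : uniq u -> uniq (vecs u k).
Proof.
elim: u k => [|i u IH] k; first by rewrite /=; case: (k == 0).
rewrite vecs_cons [uniq (i :: u)]/= => /andP[iu uu]; apply: allpairs_uniq_dep.
- exact: iota_uniq.
- by move=> x _; apply: IH.
move=> [x b] [y c] /allpairsPdep [x1 [b1 [_ hb1 [e1 e2]]]]
        /allpairsPdep [x2 [b2 [_ hb2 [e3 e4]]]] /= e.
subst.
have [h1 _] := vecs_supp hb1; have [h2 _] := vecs_supp hb2.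
have [-> ->] := vadd_inj_sc (h1 _ iu) (h2 _ iu) e.
done.
Qed.

Variable bnd : 'I_n -> nat.

Fixpoint box u : seq (expv n) :=
  match u with
  | [::] => [:: vzero]
  | i :: u' => [seq vadd (vsc i x) b | x <- iota 0 (bnd i), b <- box u']
  end.

Lemma box_cons i u : box (i :: u) =
  [seq vadd (vsc i x) b | x <- iota 0 (bnd i), b <- box u].
Proof. by []. Qed.

Lemma size_box u : size (box u) = \prod_(i <- u) bnd i.
Proof.
elim: u => [|i u IH]; first by rewrite big_nil.
rewrite box_cons.
by rewrite size_allpairs size_iota IH big_cons.
Qed.

Lemma box_supp u a : uniq u -> a \in box u ->
  (forall i, i \notin u -> a i = 0) /\ (forall i, i \in u -> a i < bnd i).
Proof.
elim: u a => [|i u IH] a; [rewrite /= | rewrite box_cons].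
  by move=> _; rewrite inE => /eqP ->; split => // i _; rewrite ffunE.
move=> /andP[iu uu] /allpairsP [[x b] [/= xin bin ->]].
have [h1 h2] := IH _ uu bin; rewrite mem_iota in xin.
split.
  move=> j; rewrite inE negb_or => /andP[/negPf ji ju].
  by rewrite !ffunE ji h1.
move=> j; rewrite inE => /orP[/eqP ->|ju].
  rewrite !ffunE eqxx h1 //; lia.
rewrite !ffunE; case: eqP => [e|_]; first by subst; rewrite ju in iu.
exact: h2.
Qed.

Lemma box_mem u a : uniq u -> (forall i, i \notin u -> a i = 0) ->
  (forall i, i \in u -> a i < bnd i) -> a \in box u.
Proof.
elim: u a => [|i u IH] a; [rewrite /= | rewrite box_cons].
  move=> _ h _; have -> : a = vzero by apply/ffunP => i; rewrite ffunE h.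
  by rewrite inE.
move=> /andP[iu uu] h hb.
pose b : expv n := [ffun j => if j == i then 0 else a j].
have ea : a = vadd (vsc i (a i)) b.
  by apply/ffunP => j; rewrite !ffunE; case: eqP => [->|]; rewrite ?addn0.
apply/allpairsP; exists (a i, b); split => //=.
  by rewrite mem_iota /= add0n hb // inE eqxx.
apply: IH => //.
  move=> j ju; rewrite ffunE; case: eqP => // /eqP ji.
  by apply: h; rewrite inE negb_or ji.
move=> j ju; rewrite ffunE; case: eqP => [ji|_]; last by apply: hb; rewrite inE ju orbT.
by move: iu; rewrite -ji ju.
Qed.

Lemma box_uniq u : uniq u -> uniq (box u).
Proof.
elim: u => [|i u IH] //; rewrite box_cons [uniq (i :: u)]/= => /andP[iu uu]; apply: allpairs_uniq.
- exact: iota_uniq.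
- exact: IH.
move=> [x b] [y c] /allpairsP [[x1 b1] [_ /= hb1 [-> ->]]]
        /allpairsP [[x2 b2] [_ /= hb2 [-> ->]]] /= e.
have [h1 _] := box_supp uu hb1; have [h2 _] := box_supp uu hb2.
by have [-> ->] := vadd_inj_sc (h1 _ iu) (h2 _ iu) e.
Qed.

End Vec.
Import GRing.Theory.

Section Setting.
Variables (K : fieldType) (n m : nat) (dege : 'I_m -> nat) (r : nat) (d : 'I_(n - r) -> nat).

Definition bnd (k : 'I_n) : nat :=
  match (insub (val k) : option 'I_(n - r)) with Some i => d i | None => 1 end.

Lemma bnd_ord (k : 'I_n) (i : 'I_(n - r)) : val k = val i -> bnd k = d i.
Proof.
rewrite /bnd => e; case: insubP => [i' _ e'|].
  by congr d; apply: val_inj; rewrite e' e.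
by rewrite e ltn_ord.
Qed.

Definition goodm (z : fmon n m) : bool :=
  [forall k : 'I_n, (k < n - r) ==> (z.1 k < bnd k)].

Lemma good_notJF z : goodm z -> ~ inJF d (monfn K z).
Proof.
move=> gz [fs [_ H]]; have := H z; rewrite /monfn eqxx big1.
  by move/eqP; rewrite oner_eq0.
move=> i _; rewrite /mulmon ifF //; apply/negbTE/forallPn.
have le : n - r <= n by apply: leq_subr.
exists (widen_ord le i); rewrite /xpow ffunE eqxx -ltnNge.
have := forallP gz (widen_ord le i); rewrite /= ltn_ord /= => h.
by rewrite -(bnd_ord (k := widen_ord le i) (i := i)).
Qed.

Lemma notgood_JF z : ~~ goodm z -> inJF d (monfn K z).
Proof.
case/forallPn => k; rewrite negb_imply -leqNgt => /andP[kl hk].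
set i0 : 'I_(n - r) := Ordinal kl.
have bk : bnd k = d i0 by apply: bnd_ord.
rewrite bk in hk.
have xle l : xpow d i0 l <= z.1 l.
  rewrite /xpow ffunE; case: eqP => // e.
  by have -> : l = k by apply: val_inj.
set z' : fmon n m := ([ffun l => z.1 l - xpow d i0 l], z.2).
exists (fun i => if i == i0 then monfn K z' else (fun _ => 0%R)); split.
  move=> i; case: eqP => _.
    by exists [:: z'] => x; rewrite inE /monfn => /negPf ->.
  by exists [::].
move=> x; rewrite (bigD1 i0) //= big1 ?addr0; last first.
  by move=> i /negPf ne; rewrite /mulmon ne; case: ifP.
rewrite eqxx /mulmon /monfn.
case: (x =P z) => [->|nxz].
  by rewrite ifT ?eqxx //; apply/forallP => l; apply: xle.
case: ifP => // hle; case: eqP => // e; exfalso; apply: nxz.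
move: x hle e => [a j] /= /forallP hle [e1 e2]; rewrite e2 [z in RHS]surjective_pairing; congr (_, _).
apply/ffunP => l; have := congr1 (fun f : expv n => f l) e1; rewrite !ffunE.
have := hle l; have := xle l; rewrite /xpow !ffunE; set p := z.1 l; set q := a l; case: (_ == _); lia.
Qed.

Lemma NJF_good (f : Fel K n m) x : NJF d f -> f x != 0%R -> goodm x.
Proof.
move=> [_ H] fx; apply/negPn/negP => ng.
exact: (H x fx) (notgood_JF ng).
Qed.

Lemma NJF_mon z : goodm z -> NJF d (monfn K z).
Proof.
move=> gz; split; first by exists [:: z] => x; rewrite inE /monfn => /negPf ->.
move=> x; case: (x =P z) => [-> _|nxz]; first exact: good_notJF.
have /negPf hx : x != z by apply/eqP.
by rewrite /monfn hx eqxx.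
Qed.

Definition U0 : seq 'I_n := filter (fun k : 'I_n => k < n - r) (enum 'I_n).
Definition V0 : seq 'I_n := filter (fun k : 'I_n => n - r <= k) (enum 'I_n).

Lemma U0_uniq : uniq U0. Proof. by rewrite filter_uniq ?enum_uniq. Qed.
Lemma V0_uniq : uniq V0. Proof. by rewrite filter_uniq ?enum_uniq. Qed.
Lemma mem_U0 k : (k \in U0) = (k < n - r). Proof. by rewrite mem_filter mem_enum andbT. Qed.
Lemma mem_V0 k : (k \in V0) = (n - r <= k). Proof. by rewrite mem_filter mem_enum andbT. Qed.

Lemma size_U0 : size U0 = n - r.
Proof.
rewrite size_filter -sum1_count big_enum_cond /=.
rewrite (eq_bigl (fun i : 'I_n => true && (i < n - r))) //.
by rewrite (big_ord_narrow_cond (leq_subr r n)) sum1_card card_ord.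
Qed.

Lemma size_V0 : r <= n -> size V0 = r.
Proof.
move=> rn; have := count_predC (fun k : 'I_n => k < n - r) (enum 'I_n).
rewrite -size_filter size_U0 size_enum_ord.
have -> : count (predC (fun k : 'I_n => k < n - r)) (enum 'I_n) = size V0.
  by rewrite size_filter; apply: eq_count => k /=; rewrite -leqNgt.
lia.
Qed.

Lemma prod_U0 : \prod_(i <- U0) bnd i = \prod_(i < n - r) d i.
Proof.
rewrite big_filter big_enum_cond /=.
rewrite (eq_bigl (fun i : 'I_n => true && (i < n - r))) //.
rewrite (big_ord_narrow_cond (leq_subr r n)); apply: eq_bigr => i _.
exact: bnd_ord.
Qed.

Definition agood t (j : 'I_m) : seq (expv n) :=
  [seq vadd b c | b <- box bnd U0,
     c <- if dege j + vsum b <= t then vecs V0 (t - dege j - vsum b) else [::]].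

Definition gm t : seq (fmon n m) := [seq (a, j) | j <- enum 'I_m, a <- agood t j].

Definition Rl : seq nat := [seq dege j + vsum b | j <- enum 'I_m, b <- box bnd U0].

Lemma size_Rl : size Rl = m * \prod_(i < n - r) d i.
Proof. by rewrite size_allpairs size_enum_ord size_box prod_U0. Qed.

Lemma size_gm t : r <= n -> size (gm t) = \sum_(a <- Rl) gf r a t.
Proof.
move=> rn; rewrite size_allpairs_dep big_allpairs_dep sumnE big_map.
apply: eq_bigr => j _; rewrite size_allpairs_dep sumnE big_map.
apply: eq_bigr => b _; rewrite /gf; case: ifP => // _.
by rewrite size_vecs size_V0 // subnDA.
Qed.

Lemma tagged_in (S T : eqType) (s : seq S) (t : S -> seq T) x y :
  @Tagged S x (fun _ => T) y \in [seq @Tagged S x (fun _ => T) y | x <- s, y <- t x] ->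
  x \in s /\ y \in t x.
Proof.
case/allpairsPdep => x0 [y0 [h1 h2 e]].
have e1 := congr1 tag e; have e2 := congr1 (@tagged S (fun _ => T)) e.
by simpl in e1, e2; subst.
Qed.

Lemma split_vec (a : expv n) :
  let b : expv n := [ffun k : 'I_n => if k < n - r then a k else 0] in
  let c : expv n := [ffun k : 'I_n => if k < n - r then 0 else a k] in
  a = vadd b c.
Proof. by move=> b c; apply/ffunP => k; rewrite !ffunE; case: ifP; rewrite ?addn0. Qed.

Lemma gm_mem t z : (z \in gm t) = goodm z && (mdeg dege z == t).
Proof.
apply/idP/idP.
  case/allpairsPdep => j [a [_ ha ->]].
  case/allpairsPdep: ha => b [c [hb hc ->]].
  case: ifP hc => // cond hc.
  have [s1 s2] := box_supp U0_uniq hb.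
  have [s3 s4] := vecs_supp hc.
  apply/andP; split.
    apply/forallP => k; apply/implyP => kl /=.
    rewrite ffunE s3 ?addn0 ?s2 ?mem_U0 // mem_V0 -ltnNge //.
  rewrite /mdeg /= -/(vsum _) vsum_add s4; apply/eqP; lia.
move=> /andP[gz /eqP dz]; case: z gz dz => a j gz dz.
apply/allpairsPdep; exists j, a; split; first by rewrite mem_enum.
  2: by [].
have ea := split_vec a; set b := [ffun _ => _] in ea; set c := [ffun _ => _] in ea.
have sa : vsum a = vsum b + vsum c by rewrite {1}ea vsum_add.
have dz' : vsum a + dege j = t by [].
apply/allpairsPdep; exists b, c; split => //.
  apply: box_mem; first exact: U0_uniq.
    by move=> k; rewrite mem_U0 ffunE => /negPf ->.
  move=> k; rewrite mem_U0 ffunE => kl; rewrite kl.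
  by have := forallP gz k; rewrite kl.
rewrite ifT; last by lia.
apply: vecs_mem; first exact: V0_uniq.
  by move=> k; rewrite mem_V0 ffunE -ltnNge => ->.
lia.
Qed.

Lemma gm_uniq t : uniq (gm t).
Proof.
apply: allpairs_uniq_dep; first exact: enum_uniq.
  move=> j _; apply: allpairs_uniq_dep; first exact: box_uniq U0_uniq.
    by move=> b _; case: ifP => // _; apply: vecs_uniq V0_uniq.
  move=> [b c] [b' c'] /tagged_in [hb hc] /tagged_in [hb' hc'] /= e.
  case: ifP hc => // _ hc; case: ifP hc' => // _ hc'.
  have [s1 _] := box_supp U0_uniq hb; have [s1' _] := box_supp U0_uniq hb'.
  have [s3 _] := vecs_supp hc; have [s3' _] := vecs_supp hc'.
  have eb : b = b'.
    apply/ffunP => k; have := congr1 (fun f : expv n => f k) e; rewrite !ffunE.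
    case: (ltnP k (n - r)) => kl.
      by rewrite s3 ?s3' ?mem_V0 -?ltnNge // !addn0.
    by rewrite s1 ?s1' ?mem_U0 -?leqNgt.
  subst b'; have ec : c = c'.
    by apply/ffunP => k; have := congr1 (fun f : expv n => f k) e; rewrite !ffunE => /addnI.
  by rewrite ec.
by move=> [j a] [j' a'] _ _ /= [-> ->].
Qed.

End Setting.

Lemma sum_base_inj B n (F G : 'I_n -> nat) : (forall i, F i < B) -> (forall i, G i < B) ->
  \sum_(i < n) F i * B ^ i = \sum_(i < n) G i * B ^ i -> forall i, F i = G i.
Proof.
elim: n F G => [|n IH] F G hF hG e i; first by case: i.
have ex (X : 'I_n.+1 -> nat) : \sum_(i < n) X (lift ord0 i) * B ^ (bump 0 i)
    = B * \sum_(i < n) X (lift ord0 i) * B ^ i.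
  rewrite big_distrr; apply: eq_bigr => j _ /=.
  by rewrite /bump /= add1n expnS mulnCA.
rewrite !big_ord_recl /= !expn0 !muln1 !ex in e.
have B0 : 0 < B by have := hF ord0; lia.
have e0 : F ord0 = G ord0.
  have := congr1 (fun x => x %% B) e; rewrite /= ![_ + B * _]addnC.
  by rewrite ![B * _]mulnC !modnMDl !modn_small.
rewrite e0 in e; move/addnI/eqP: e; rewrite eqn_pmul2l // => /eqP e.
have IH' := IH (fun j => F (lift ord0 j)) (fun j => G (lift ord0 j)) (fun j => hF _) (fun j => hG _) e.
by case: (unliftP ord0 i) => [j ->|->].
Qed.

Section Wt.
Variable n : nat.
Definition wt (B : nat) (a : expv n) := \sum_(i < n) a i * B ^ i.

Lemma wt_add B a b : wt B (vadd a b) = wt B a + wt B b.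
Proof. by rewrite /wt -big_split; apply: eq_bigr => i _; rewrite ffunE mulnDl. Qed.

Lemma wt_sub B (a z : expv n) : (forall i, a i <= z i) ->
  wt B [ffun i => z i - a i] + wt B a = wt B z.
Proof.
move=> h; rewrite /wt -big_split; apply: eq_bigr => i _; rewrite ffunE /= -mulnDl.
by rewrite subnK.
Qed.

Lemma wt_inj B (a b : expv n) : (forall i, a i < B) -> (forall i, b i < B) ->
  wt B a = wt B b -> a = b.
Proof. by move=> ha hb e; apply/ffunP; apply: sum_base_inj ha hb e. Qed.

Lemma le_vsum (a : expv n) i : a i <= vsum a.
Proof. by rewrite /vsum (bigD1 i) //= leq_addr. Qed.
End Wt.

Lemma seq_argmax (T : eqType) (s : seq T) (p : pred T) (f : T -> nat) :
  has p s -> exists2 y, (y \in s) && p y & forall z, z \in s -> p z -> f z <= f y.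
Proof.
elim: s => [|x s IH] //= hx.
case: (boolP (has p s)) => hs.
  have [y /andP[ys py] hy] := IH hs.
  case: (boolP (p x && (f y < f x))) => [/andP[px lt]|nb].
    exists x; first by rewrite inE eqxx px.
    move=> z; rewrite inE => /orP[/eqP ->|zs] pz //.
    by apply: leq_trans (hy z zs pz) (ltnW lt).
  exists y; first by rewrite inE ys orbT py.
  move=> z; rewrite inE => /orP[/eqP ->|zs] pz; last exact: hy.
  by move: nb; rewrite pz /= -leqNgt.
have px : p x by move: hx; rewrite (negbTE hs) orbF.
exists x; first by rewrite inE eqxx px.
move=> z; rewrite inE => /orP[/eqP ->|zs] pz //.
by case/hasP: hs; exists z.
Qed.

Import GRing.Theory.

Section Cones.
Variables (K : fieldType) (n m : nat) (dege : 'I_m -> nat).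

Definition gens (c : cone K n m) t : seq (expv n) :=
  if cdeg c <= t then vecs (enum (cu c)) (t - cdeg c) else [::].

Lemma size_gens (c : cone K n m) t : size (gens c t) = gf (cdim c) (cdeg c) t.
Proof. by rewrite /gens /gf; case: ifP => // _; rewrite size_vecs -cardE. Qed.

Lemma gens_mem (c : cone K n m) t (a : expv n) : a \in gens c t ->
  (forall i, i \notin cu c -> a i = 0) /\ vsum a + cdeg c = t.
Proof.
rewrite /gens; case: ifP => // le /vecs_supp [h1 h2]; split; last by lia.
by move=> i hi; apply: h1; rewrite mem_enum.
Qed.

Lemma gens_in (c : cone K n m) t (a : expv n) : (forall i, i \notin cu c -> a i = 0) -> vsum a + cdeg c = t ->
  a \in gens c t.
Proof.
move=> h1 h2; rewrite /gens ifT; last by lia.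
apply: vecs_mem; first exact: enum_uniq.
  by move=> i; rewrite mem_enum; apply: h1.
lia.
Qed.

Lemma gens_uniq (c : cone K n m) t : uniq (gens c t).
Proof. by rewrite /gens; case: ifP => // _; apply: vecs_uniq; apply: enum_uniq. Qed.

Lemma vsum_sub (a z : expv n) : (forall i, a i <= z i) ->
  vsum [ffun i => z i - a i] + vsum a = vsum z.
Proof.
move=> h; rewrite /vsum -big_split; apply: eq_bigr => i _; rewrite ffunE /=.
by rewrite subnK.
Qed.

Lemma mulmon_hom (c : cone K n m) (al : expv n) x : cone_valid dege c ->
  mulmon al (ch c) x != 0%R -> mdeg dege x = vsum al + cdeg c.
Proof.
move=> [_ [_ hh]]; rewrite /mulmon; case: ifP => [/forallP le|]; last by rewrite eqxx.
move=> /hh; rewrite /mdeg /= => <-.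
move: (vsum_sub le); rewrite /vsum; move: (\sum_(i < n) x.1 i) (\sum_(i < n) al i) (\sum_(i < n) [ffun i0 => x.1 i0 - al i0] i) => A B C; lia.
Qed.

Lemma cone_set_mon (c : cone K n m) (al : expv n) : (forall i, i \notin cu c -> al i = 0) ->
  cone_set c (mulmon al (ch c)).
Proof.
move=> h; exists [:: (al, 1%R)]; split.
  by move=> p; rewrite inE => /eqP -> i /= /h.
by move=> x; rewrite big_seq1 /= mul1r.
Qed.
End Cones.

Section Lin.
Variables (K : fieldType) (n m : nat) (dege : 'I_m -> nat) (r : nat) (d : 'I_(n - r) -> nat)
  (k : nat) (P : 'I_k -> cone K n m).
Hypothesis HP : cone_decomp dege (NJF d) P.
Variable t : nat.

Local Notation G := (@gm n m dege r d t).
Local Notation N := (size G).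

Definition pi (f : Fel K n m) : 'rV[K]_N := \row_(i < N) f (tnth (in_tuple G) i).

Definition Xc (c : cone K n m) : seq 'rV[K]_N := [seq pi (mulmon a (ch c)) | a <- gens c t].

Lemma hvalid i : cone_valid dege (P i). Proof. by case: HP. Qed.
Lemma hin i g : cone_set (P i) g -> NJF d g. Proof. by case: HP => _ h _ _; apply: h. Qed.

Lemma tnthG (j : 'I_N) : goodm d (tnth (in_tuple G) j) && (mdeg dege (tnth (in_tuple G) j) == t).
Proof. by rewrite -gm_mem mem_tnth. Qed.

Lemma inG z : z \in G -> exists j : 'I_N, z = tnth (in_tuple G) j.
Proof.
move=> zG; have hi : index z G < N by rewrite index_mem.
by exists (Ordinal hi); rewrite (tnth_nth z) /= nth_index.
Qed.

Lemma pi_sum (c : cone K n m) (s : seq (expv n * K)) :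
  pi (fun x => \sum_(p <- s) p.2 * mulmon p.1 (ch c) x)%R =
  (\sum_(p <- s) p.2 *: pi (mulmon p.1 (ch c)))%R.
Proof.
apply/rowP => j; rewrite mxE summxE; apply: eq_bigr => p _.
by rewrite !mxE.
Qed.

Lemma pi_zero (c : cone K n m) (a : expv n) : cone_valid dege c ->
  vsum a + cdeg c != t -> pi (mulmon a (ch c)) = 0%R.
Proof.
move=> hv ne; apply/rowP => j; rewrite !mxE.
case: (eqVneq (mulmon a (ch c) (tnth (in_tuple G) j)) 0%R) => // nz.
have := mulmon_hom hv nz.
by have := tnthG j => /andP[_ /eqP ->] e; rewrite e eqxx in ne.
Qed.

Definition Wc (c : cone K n m) : {vspace 'rV[K]_N} := <<Xc c>>%VS.

Lemma W_in (c : cone K n m) g : cone_valid dege c -> cone_set c g -> pi g \in Wc c.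
Proof.
move=> hv [s [hs hg]].
have -> : pi g = (\sum_(p <- s) p.2 *: pi (mulmon p.1 (ch c)))%R.
  by rewrite -pi_sum; apply/rowP => j; rewrite !mxE hg.
rewrite big_seq; apply: rpred_sum => p ps; apply: rpredZ.
case: (eqVneq (vsum p.1 + cdeg c) t) => e.
  by apply: memv_span; apply: map_f; apply: gens_in => // i; apply: hs.
by rewrite pi_zero ?mem0v.
Qed.

Lemma full_sub : (fullv <= \sum_(i < k) Wc (P i))%VS.
Proof.
apply/subvP => v _; rewrite (row_sum_delta v); apply: rpred_sum => j _; apply: rpredZ.
set z := tnth (in_tuple G) j.
have ez : (('e_j)%R : 'rV[K]_N) = pi (monfn K z).
  apply/rowP => j'; rewrite !mxE /monfn /z !(tnth_nth z) /= nth_uniq ?gm_uniq //.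
  by rewrite -[j' == j]/(val j' == val j); case: (_ == _).
have [gz _] := andP (tnthG j).
case: HP => _ _ hdec _.
have [g [hg hsum]] := hdec _ (NJF_mon K gz).
have -> : (('e_j)%R : 'rV[K]_N) = (\sum_(i < k) pi (g i))%R.
  by rewrite ez; apply/rowP => j'; rewrite !mxE summxE hsum; apply: eq_bigr => i _; rewrite mxE.
by apply: memv_sumr => i _; apply: W_in (hvalid i) (hg i).
Qed.

Lemma direct : directv (\sum_(i < k) Wc (P i)).
Proof.
apply/directv_sum_independent => us hus hsum i0 _.
pose co i := coord (in_tuple (Xc (P i))) ^~ (us i).
have hco i : us i = (\sum_(l < size (Xc (P i))) co i l *: (Xc (P i))`_l)%R.
  exact: (coord_span (X := in_tuple (Xc (P i))) (hus i isT)).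
pose A i := gens (P i) t.
have sA i : size (Xc (P i)) = size (A i) by rewrite size_map.
pose s i := [seq (nth (vzero n) (A i) l, co i l : K) | l : 'I_(size (Xc (P i))) <- enum 'I_(size (Xc (P i)))].
pose g i : Fel K n m := fun x => (\sum_(p <- s i) p.2 * mulmon p.1 (ch (P i)) x)%R.
have gset i : cone_set (P i) (g i).
  exists (s i); split => //.
  move=> p /mapP [l _ ->] /=; have lA : l < size (A i) by rewrite -sA.
  by have [h _] := gens_mem (mem_nth (vzero n) lA).
have pig i : pi (g i) = us i.
  rewrite pi_sum big_map big_enum /= hco; apply: eq_bigr => l _ /=.
  by rewrite (nth_map (vzero n)) // -sA.
have g0 x : (\sum_(i < k) g i x = 0)%R.
  case: (boolP (x \in G)) => xG.
    have [j ->] := inG xG.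
    have e := congr1 (fun v : 'rV[K]_N => v ord0 j) hsum; rewrite /= summxE mxE in e.
    by rewrite -[RHS]e; apply: eq_bigr => i _; rewrite -pig mxE.
  apply: big1 => i _; apply: big1_seq => p /andP[_ /mapP [l _ ->]] /=.
  case: (eqVneq (mulmon (nth (vzero n) (A i) l) (ch (P i)) x) 0%R) => [->|nz].
    by rewrite mulr0.
  exfalso; move/negP: xG; apply; rewrite gm_mem.
  have lA : l < size (A i) by rewrite -sA.
  have [_ e] := gens_mem (mem_nth (vzero n) lA).
  rewrite (mulmon_hom (hvalid i) nz) e eqxx andbT.
  apply: (NJF_good (f := mulmon (nth (vzero n) (A i) l) (ch (P i)))) nz.
  by apply: (hin (i := i)); apply: cone_set_mon; have [h _] := gens_mem (mem_nth (vzero n) lA).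
case: HP => _ _ _ hdir.
have gz := hdir g gset g0 i0.
rewrite -pig; apply/rowP => j; rewrite !mxE; exact: gz.
Qed.
Lemma free_Xc i : free (Xc (P i)).
Proof.
have hv := hvalid i; set c := P i in hv *.
apply/(freeP (X := in_tuple (Xc c))) => co hco l0.
set A := gens c t.
have sA : size (Xc c) = size A by rewrite size_map.
case: (eqVneq (co l0) 0%R) => // hnz; exfalso.
set B := t.+1.
have hasl : has (fun l => co l != 0%R) (enum 'I_(size (Xc c))).
  by apply/hasP; exists l0; rewrite ?mem_enum.
have [ls /andP[_ cls] hls] := seq_argmax (fun l : 'I_(size (Xc c)) => wt B (nth (vzero n) A l)) hasl.
set a := nth (vzero n) A ls.
have lsA : ls < size A by rewrite -sA.
have [asupp adeg] := gens_mem (mem_nth (vzero n) lsA).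
have hv' := hv; case: hv' => [[sh hsh] [[x0 hx0] hhom]].
have hasy : has (fun y => ch c y != 0%R) sh.
  apply/hasP; exists x0 => //; apply/negPn/negP => nx.
  by move: hx0; rewrite hsh ?eqxx.
have [ys /andP[ysh hys] hmaxy] := seq_argmax (fun y : fmon n m => wt B y.1) hasy.
set z : fmon n m := (vadd a ys.1, ys.2).
have ea : mulmon a (ch c) z = ch c ys.
  rewrite /mulmon ifT; last by apply/forallP => l; rewrite /= ffunE leq_addr.
  congr (ch c _); rewrite [ys in RHS]surjective_pairing; congr (_, _).
  by apply/ffunP => l; rewrite /= !ffunE addKn.
have zG : z \in G.
  rewrite gm_mem; apply/andP; split.
    apply: (NJF_good (f := mulmon a (ch c))); last by rewrite ea.
    by apply: (hin (i := i)); apply: cone_set_mon.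
  by rewrite (mulmon_hom (al := a) hv) ?ea // adeg.
have [j ej] := inG zG.
have bnd_el (b : expv n) : b \in A -> forall q, b q < B.
  move=> bA q; have [_ e] := gens_mem bA; have := le_vsum b q.
  rewrite /B; lia.
have := congr1 (fun v : 'rV[K]_N => v ord0 j) hco; rewrite /= summxE mxE.
rewrite (bigD1 ls) //= big1 ?addr0; last first.
  move=> l hl; rewrite mxE; case: (eqVneq (co l) 0%R) => [->|cl]; first by rewrite mul0r.
  have lA : l < size A by rewrite -sA.
  set b := nth (vzero n) A l.
  have wb : wt B b <= wt B a by apply: (hls l) => //; rewrite mem_enum.
  have nb : b != a.
    by rewrite /b /a nth_uniq ?gens_uniq.
  have wlt : wt B b < wt B a.
    rewrite ltn_neqAle wb andbT; apply/negP => /eqP e.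
    move/negP: nb; apply; apply/eqP; apply: wt_inj e; apply: bnd_el; exact: mem_nth.
  rewrite (nth_map (vzero n)) // mxE -ej /mulmon.
  case: ifP => [/forallP hle|]; last by rewrite mulr0.
  case: (eqVneq (ch c ([ffun q => z.1 q - b q], z.2)) 0%R) => [->|nz]; first by rewrite mulr0.
  exfalso.
  have wsh : ([ffun q => z.1 q - b q], z.2) \in sh.
    by apply/negPn/negP => nx; move: nz; rewrite hsh ?eqxx.
  have e2 : wt B [ffun q => z.1 q - b q] <= wt B ys.1 := hmaxy _ wsh nz.
  have e1 := wt_sub B hle; rewrite /= wt_add in e1.
  change (wt B [ffun q => z.1 q - b q] + wt B b = wt B a + wt B ys.1) in e1.
  move: e1 e2 wlt; move: (wt B [ffun q => z.1 q - b q]) (wt B b) (wt B a) (wt B ys.1).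
  move=> x1 x2 x3 x4; lia.
rewrite mxE (nth_map (vzero n)) // mxE -ej -/a ea => /eqP.
by rewrite mulf_eq0 (negbTE cls) (negbTE hys).
Qed.

Lemma hilb : N = \sum_(i < k) gf (cdim (P i)) (cdeg (P i)) t.
Proof.
have full : (\sum_(i < k) Wc (P i))%VS = fullv.
  by apply/eqP; rewrite eqEsubv subvf full_sub.
have dN : \dim (fullv : {vspace 'rV[K]_N}) = N by rewrite dimvf /dim /= mul1n.
rewrite -dN -full (directvP direct) /=.
apply: eq_bigr => i _.
by rewrite /Wc (eqP (free_Xc i)) size_map size_gens.
Qed.
End Lin.

Unset Implicit Arguments.

Theorem corollary7p4 (K : fieldType) (n m : nat) (dege : 'I_m -> nat)
    (r : nat) (d : 'I_(n - r) -> nat) (D : nat) (k : nat) (P : 'I_k -> cone K n m) :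
  1 <= r <= n ->
  (forall i, 0 < d i) ->
  \max_(j < m) dege j <= D ->
  cone_decomp dege (NJF d) P ->
  q_exact P D ->
  macaulay P D r = (\prod_(i < n - r) d i) * m + D.
Proof.
move=> /andP[r1 rn] dpos hl HP [[hs1 hs2] hex].
set L := [seq (cdim (P i), cdeg (P i)) | i <- enum 'I_k].
have H t : \sum_(p <- L) gf p.1 p.2 t = \sum_(a <- Rl dege d) gf r a t.
  rewrite -size_gm // (hilb HP t) big_map big_enum /=.
  by apply: eq_bigl => i.
have [allr cnt] := diff_main r1 H.
rewrite size_Rl count_map in cnt.
have dimr i : cdim (P i) <= r.
  by have := allP allr _ (map_f (fun i => (cdim (P i), cdeg (P i))) (mem_enum _ i)).
set S := fun i : 'I_k => r <= cdim (P i).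
have cntS : count S (enum 'I_k) = m * \prod_(i < n - r) d i.
  rewrite -cnt; apply: eq_count => i /=; rewrite /S eqn_leq dimr //.
rewrite mulnC -cntS /macaulay -/S.
case: (boolP (has S (enum 'I_k))) => hS; last first.
  rewrite big_pred0; last first.
    move=> i; apply/negbTE/negP => si; move/hasP: hS; apply; by exists i; rewrite ?mem_enum.
  have : count S (enum 'I_k) = 0 by apply/eqP; rewrite eqn0Ngt -has_count.
  by move=> ->; rewrite maxn0.
have [ist /andP[_ Sis] hmax] := seq_argmax (fun i => cdeg (P i)) hS.
set e := cdeg (P ist).
have eM : \max_(i < k | S i) (cdeg (P i)).+1 = e.+1.
  apply/eqP; rewrite eqn_leq; apply/andP; split.
    by apply/bigmax_leqP => i si; rewrite ltnS; apply: hmax; rewrite ?mem_enum.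
  have := @leq_bigmax_cond _ S (fun i => (cdeg (P i)).+1) ist Sis; by [].
rewrite eM.
have dpos' i : S i -> 0 < cdim (P i) by rewrite /S => h; lia.
have De : D <= e by apply: hs1; apply: dpos'.
set degs := [seq cdeg (P i) | i <- [seq i <- enum 'I_k | S i]].
have sdeg : size degs = count S (enum 'I_k) by rewrite size_map size_filter.
have udeg : uniq degs.
  rewrite map_inj_in_uniq; first exact: (filter_uniq _ (enum_uniq _)).
  move=> i j; rewrite !mem_filter => /andP[si _] /andP[sj _] eij.
  apply/eqP; apply/negPn/negP => nij.
  by have := hex i j nij (dpos' i si) (dpos' j sj); rewrite eij eqxx.
have le1 : size degs <= size (iota D (e.+1 - D)).
  apply: uniq_leq_size udeg _ => x /mapP [i]; rewrite mem_filter => /andP[si _] ->.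
  rewrite mem_iota; have := hs1 i (dpos' i si); have := hmax i (mem_enum _ i) si.
  rewrite -/e; lia.
have le2 : size (iota D (e.+1 - D)) <= size degs.
  apply: uniq_leq_size (iota_uniq _ _) _ => x; rewrite mem_iota => hx.
  have [j [ej dj]] := hs2 ist (dpos' ist Sis) x ltac:(rewrite -/e; apply/andP; lia).
  apply/mapP; exists j => //; rewrite mem_filter mem_enum andbT.
  by rewrite /S; apply: leq_trans dj.
rewrite size_iota in le1 le2.
rewrite -sdeg; lia.
Qed.
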